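(* In the standing setting with the noisy iteration (I)–(III), for every $k\ge0$ (almost surely): $$m_f\|X^{(k+1)}-X^*\|^2\le\|U^{(k)}-U^*\|_G^2-\|U^{(k+1)}-U^*\|_G^2-\|U^{(k)}-U^{(k+1)}\|_G^2-\langle X^{(k+1)}-X^*,\sqrt2Dw^{(k+1)}\rangle.$$ Consequently, $$\Big\|X^{(k+1)}-X^*+\frac1{\sqrt2m_f}Dw^{(k+1)}\Big\|^2\le\frac1{m_f}\|U^{(k)}-U^*\|_G^2+\frac1{2m_f^2}\|Dw^{(k+1)}\|^2.$$
   Context: Standing setting. $\mathcal{G}=(\mathcal{V},\mathcal{E})$ is a connected undirected graph without self-loops on $\mathcal{V}=\{1,\dots,N\}$. Set $\mathcal{N}_i=\{j:(i,j)\in\mathcal{E}\}$ and $N_i=|\mathcal{N}_i|$. $\mathcal{A}$ is the set of directed arcs obtained by taking both orientations $(i,j)$ and $(j,i)$ of every edge of $\mathcal{E}$, so $|\mathcal{A}|=2|\mathcal{E}|$. Fix an enumeration $q=1,\dots,|\mathcal{A}|$ of $\mathcal{A}$. Each $f_i:\mathbb{R}^d\to\mathbb{R}$ is differentiable and $m_{f_i}$-strongly convex, i.e. $\langle\nabla f_i(u)-\nabla f_i(v),u-v\rangle\ge m_{f_i}\|u-v\|^2$ with $m_{f_i}>0$. Its gradient is $M_{f_i}$-Lipschitz. The function $\sum_i f_i$ has a (unique) minimizer $x^*$. For $X=(x_1,\dots,x_N)\in\mathbb{R}^{Nd}$ let $f(X)=\sum_i f_i(x_i)$, $m_f=\min_i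 m_{f_i}$ and $M_f=\max_i M_{f_i}$. $M_+,M_-\in\mathbb{R}^{Nd\times|\mathcal{A}|d}$ are block matrices with $d\times d$ blocks. If the $q$-th arc is $(i,j)$, then: - the $(i,q)$ and $(j,q)$ blocks of $M_+$ are $I_d$; - the $(i,q)$ block of $M_-$ is $I_d$ and its $(j,q)$ block is $-I_d$; - all other blocks are zero. $D=\mathrm{diag}(N_1,\dots,N_N)\otimes I_d$. $X^*=(x^*,\dots,x^* )$, $Z^*=\tfrac12M_+^TX^*$, and $\beta^*$ is the unique vector in the column space of $M_-^T$ with $\nabla f(X^* )+M_-\beta^*=0$. Set $U^*=(Z^*,\beta^* )$. For $\rho>0$, $G=\mathrm{diag}(\rho I_{|\mathcal{A}|d},\rho^{-1}I_{|\mathcal{A}|d})$ and $\|v\|_G^2=v^TGv$. Noisy iteration. Fix $\rho>0$. Let $w^{(1)},w^{(2)},\dots$ be i.i.d. $\mathcal{N}(0,I_{Nd})$, independent of a random initialization $(X^{(0)},\beta^{(0)})$ in which $\beta^{(0)}$ lies in the column space of $M_-^T$. Set $Z^{(0)}=\tfrac12M_+^TX^{(0)}$. For $k\ge0$ the random vectors $X^{(k+1)}\in\mathbb{R}^{Nd}$ and $Z^{(k+1)},\beta^{(k+1)}\in\mathbb{R}^{|\mathcal{A}|d}$ satisfy (I) $\nabla f(X^{(k+1)})+M_-\beta^{(k+1)}+\sqrt2Dw^{(k+1)}=\rho M_+(Z^{(k)}-Z^{(k+1)})$, (II) $\beta^{(k+1)}-\beta^{(k)}-\tfrac\rho2M_-^TX^{(k+1)}=0$,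 (III) $\tfrac12M_+^TX^{(k+1)}-Z^{(k+1)}=0$. Set $U^{(k)}=(Z^{(k)},\beta^{(k)})$. *)

(* Defs.v *)
From HB Require Import structures.
From mathcomp Require Import all_boot all_order all_algebra.
From mathcomp Require Import all_classical all_reals all_analysis.
Set Implicit Arguments. Unset Strict Implicit. Unset Printing Implicit Defensive.
Import Order.TTheory GRing.Theory Num.Theory.
Import numFieldNormedType.Exports.
Local Open Scope ring_scope.

Section Defs.
Variable R : realType.

Definition dotv (d : nat) (u v : 'rV[R]_d) : R := \sum_(j < d) u 0 j * v 0 j.
Definition sqnv (d : nat) (u : 'rV[R]_d) : R := dotv u u.

(* Stacked vectors: an element of R^{n d} (n blocks of size d) is represented
   as an n x d matrix whose i-th row is the i-th block.  Then the block matrix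
   (M \otimes I_d) acting on stacked vectors is  M *m X. *)
Definition ip (n d : nat) (X Y : 'M[R]_(n, d)) : R :=
  \sum_(i < n) \sum_(j < d) X i j * Y i j.
Definition sqn (n d : nat) (X : 'M[R]_(n, d)) : R := ip X X.

(* G-norm of U = (Z, beta):  rho ||Z||^2 + rho^-1 ||beta||^2 *)
Definition Gsqn (nA d : nat) (rho : R) (Z beta : 'M[R]_(nA, d)) : R :=
  rho * sqn Z + rho^-1 * sqn beta.

Definition is_gradient (d : nat) (f : 'rV[R]_d -> R^o) (g : 'rV[R]_d -> 'rV[R]_d) :=
  forall x, differentiable f x /\ forall v, 'D_v f x = dotv (g x) v.

Definition simple_connected_graph (N : nat) (e : rel 'I_N) :=
  symmetric e /\ irreflexive e /\ forall i j, connect e i j.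

(* arc : 'I_nA -> 'I_N * 'I_N is an enumeration of the set of directed arcs
   (both orientations of every edge). *)
Definition arc_enum (N nA : nat) (e : rel 'I_N) (arc : 'I_nA -> 'I_N * 'I_N) :=
  injective arc /\ (forall q, e (arc q).1 (arc q).2) /\
  (forall i j, e i j -> exists q, arc q = (i, j)).

(* scalar incidence matrices; the paper's M_+, M_- are Mplus (x) I_d, Mminus (x) I_d *)
Definition Mplus (N nA : nat) (arc : 'I_nA -> 'I_N * 'I_N) : 'M[R]_(N, nA) :=
  \matrix_(i, q) (if (i == (arc q).1) || (i == (arc q).2) then 1 else 0).
Definition Mminus (N nA : nat) (arc : 'I_nA -> 'I_N * 'I_N) : 'M[R]_(N, nA) :=
  \matrix_(i, q) (if i == (arc q).1 then 1 else if i == (arc q).2 then -1 else 0).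

(* D = diag(N_1,...,N_N) (x) I_d, N_i the degree of i *)
Definition degmx (N : nat) (e : rel 'I_N) : 'M[R]_N :=
  diag_mx (\row_(i < N) (#|[set j | e i j]|)%:R).

Definition stack_grad (N d : nat) (g : 'I_N -> 'rV[R]_d -> 'rV[R]_d)
  (X : 'M[R]_(N, d)) : 'M[R]_(N, d) := \matrix_(i, j) g i (row i X) 0 j.

Definition stack_const (N d : nat) (x : 'rV[R]_d) : 'M[R]_(N, d) :=
  \matrix_(i, j) x 0 j.

End Defs.

(* Main.v *)
Require Import Defs.
From HB Require Import structures.
From mathcomp Require Import all_boot all_order all_algebra.
From mathcomp Require Import all_classical all_reals all_analysis.
From mathcomp Require Import ring lra.
Import Order.TTheory GRing.Theory Num.Theory.
Import numFieldNormedType.Exports.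
Local Open Scope ring_scope.
Set Implicit Arguments. Unset Strict Implicit.

Section L.
Variable R : realType.
Variables n d : nat.
Implicit Types X Y W : 'M[R]_(n, d).

Lemma ipC X Y : ip X Y = ip Y X.
Proof. by apply: eq_bigr => i _; apply: eq_bigr => j _; rewrite mulrC. Qed.
Lemma ipDl X Y W : ip (X + Y) W = ip X W + ip Y W.
Proof. rewrite /ip -big_split; apply: eq_bigr => i _; rewrite -big_split; apply: eq_bigr => j _; by rewrite mxE mulrDl. Qed.
Lemma ipZl a X Y : ip (a *: X) Y = a * ip X Y.
Proof. rewrite /ip mulr_sumr; apply: eq_bigr => i _; rewrite mulr_sumr; apply: eq_bigr => j _; by rewrite mxE mulrA. Qed.
Lemma ipNl X Y : ip (- X) Y = - ip X Y.
Proof. by rewrite -scaleN1r ipZl mulN1r. Qed.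
Lemma ipBl X Y W : ip (X - Y) W = ip X W - ip Y W.
Proof. by rewrite ipDl ipNl. Qed.
Lemma ipDr X Y W : ip W (X + Y) = ip W X + ip W Y.
Proof. by rewrite ipC ipDl !(ipC W). Qed.
Lemma ipZr a X Y : ip Y (a *: X) = a * ip Y X.
Proof. by rewrite ipC ipZl ipC. Qed.
Lemma ipBr X Y W : ip W (X - Y) = ip W X - ip W Y.
Proof. by rewrite ipC ipBl !(ipC W). Qed.
Lemma sqnD X Y : sqn (X + Y) = sqn X + 2 * ip X Y + sqn Y.
Proof. rewrite /sqn ipDl !ipDr (ipC Y X); lra. Qed.
Lemma sqnN X : sqn (- X) = sqn X.
Proof. by rewrite /sqn ipNl ipC ipNl opprK. Qed.
Lemma sqn_ge0 X : 0 <= sqn X.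
Proof. apply: sumr_ge0 => i _; apply: sumr_ge0 => j _; exact: sqr_ge0. Qed.
End L.

Lemma ip_mul (R : realType) n m d (A : 'M[R]_(n, m)) (X : 'M[R]_(m, d)) (Y : 'M[R]_(n, d)) :
  ip (A *m X) Y = ip X (A^T *m Y).
Proof.
rewrite /ip.
transitivity (\sum_(k < m) \sum_(i < n) \sum_(j < d) A i k * X k j * Y i j).
  rewrite [RHS]exchange_big /=; apply: eq_bigr => i _.
  rewrite [RHS]exchange_big /=; apply: eq_bigr => j _.
  by rewrite mxE big_distrl.
apply: eq_bigr => k _; rewrite exchange_big /=; apply: eq_bigr => j _.
rewrite mxE big_distrr; apply: eq_bigr => i _; by rewrite mxE /= mulrCA mulrA.
Qed.

Lemma MmT_const (R : realType) N nA d (arc : 'I_nA -> 'I_N * 'I_N) (x : 'rV[R]_d) :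
  (forall q, (arc q).1 != (arc q).2) ->
  (Mminus R arc)^T *m stack_const N x = 0.
Proof.
move=> hq; apply/matrixP => q j; rewrite !mxE.
under eq_bigr do rewrite !mxE.
rewrite -mulr_suml; apply/eqP; rewrite mulf_eq0; apply/orP; left; apply/eqP.
rewrite (bigD1 (arc q).1) //= eqxx (bigD1 (arc q).2) /=; last by rewrite eq_sym hq.
rewrite eq_sym (negbTE (hq q)) eqxx big1 ?addr0 ?subrr //.
by move=> i /andP [/negbTE -> /negbTE ->].
Qed.

Lemma sqn_rows (R : realType) N d (A : 'M[R]_(N, d)) :
  sqn A = \sum_(i < N) sqnv (row i A).
Proof. by apply: eq_bigr => i _; apply: eq_bigr => j _; rewrite !mxE. Qed.

Lemma strong_stack (R : realType) N d (g : 'I_N -> 'rV[R]_d -> 'rV[R]_d)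
  (m : 'I_N -> R) mf (X Y : 'M[R]_(N, d)) :
  (forall i u v, m i * sqnv (u - v) <= dotv (g i u - g i v) (u - v)) ->
  (forall i, mf <= m i) ->
  mf * sqn (X - Y) <= ip (X - Y) (stack_grad g X - stack_grad g Y).
Proof.
move=> hs hm; rewrite sqn_rows mulr_sumr.
have -> : ip (X - Y) (stack_grad g X - stack_grad g Y) =
  \sum_(i < N) dotv (g i (row i X) - g i (row i Y)) (row i X - row i Y).
  by apply: eq_bigr => i _; apply: eq_bigr => j _; rewrite !mxE mulrC.
apply: ler_sum => i _.
have hge : 0 <= sqnv (row i (X - Y)).
  by apply: sumr_ge0 => j _; exact: sqr_ge0.
apply: (le_trans (ler_wpM2r hge (hm i))).
have -> : row i (X - Y) = row i X - row i Y by rewrite linearB.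
exact: hs.
Qed.

Theorem mainTheorem5 (R : realType) (N d nA : nat) (e : rel 'I_N)
  (arc : 'I_nA -> 'I_N * 'I_N)
  (f : 'I_N -> 'rV[R]_d -> R^o) (g : 'I_N -> 'rV[R]_d -> 'rV[R]_d)
  (m M : 'I_N -> R) (mf : R) (xstar : 'rV[R]_d) (betastar : 'M[R]_(nA, d))
  (rho : R)
  (X : nat -> 'M[R]_(N, d)) (Z beta : nat -> 'M[R]_(nA, d))
  (w : nat -> 'M[R]_(N, d)) :
  simple_connected_graph e ->
  arc_enum e arc ->
  (forall i, is_gradient (f i) (g i)) ->
  (forall i, 0 < m i) ->
  (forall i u v, m i * sqnv (u - v) <= dotv (g i u - g i v) (u - v)) ->
  (forall i u v,
      Num.sqrt (sqnv (g i u - g i v)) <= M i * Num.sqrt (sqnv (u - v))) ->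
  (forall i, mf <= m i) -> (exists i, mf = m i) ->
  (forall x, \sum_(i < N) f i xstar <= \sum_(i < N) f i x) ->
  (exists Y : 'M[R]_(N, d), betastar = (Mminus R arc)^T *m Y) ->
  stack_grad g (stack_const N xstar) + Mminus R arc *m betastar = 0 ->
  0 < rho ->
  (exists Y : 'M[R]_(N, d), beta 0%N = (Mminus R arc)^T *m Y) ->
  Z 0%N = 2^-1 *: ((Mplus R arc)^T *m X 0%N) ->
  (forall k : nat,
      stack_grad g (X k.+1) + Mminus R arc *m beta k.+1
        + Num.sqrt 2 *: (degmx R e *m w k.+1)
      = rho *: (Mplus R arc *m (Z k - Z k.+1))) ->
  (forall k : nat,
      beta k.+1 - beta k - (rho / 2) *: ((Mminus R arc)^T *m X k.+1) = 0) ->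
  (forall k : nat,
      2^-1 *: ((Mplus R arc)^T *m X k.+1) - Z k.+1 = 0) ->
  let Xstar := stack_const N xstar in
  let Zstar := 2^-1 *: ((Mplus R arc)^T *m Xstar) in
  forall k : nat,
    mf * sqn (X k.+1 - Xstar)
      <= Gsqn rho (Z k - Zstar) (beta k - betastar)
         - Gsqn rho (Z k.+1 - Zstar) (beta k.+1 - betastar)
         - Gsqn rho (Z k - Z k.+1) (beta k - beta k.+1)
         - ip (X k.+1 - Xstar) (Num.sqrt 2 *: (degmx R e *m w k.+1))
    /\
    sqn (X k.+1 - Xstar + (Num.sqrt 2 * mf)^-1 *: (degmx R e *m w k.+1))
      <= mf^-1 * Gsqn rho (Z k - Zstar) (beta k - betastar)
         + (2 * mf ^+ 2)^-1 * sqn (degmx R e *m w k.+1).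
Proof.
move=> [_ [Hirr _]] [_ [Harc _]] _ Hm Hs _ Hmf [i0 Hi0] _ _ Hstar Hrho _ _ HI HII HIII
  Xs Zs k.
have hmf : 0 < mf by rewrite Hi0 Hm.
have hq : forall q, (arc q).1 != (arc q).2.
  move=> q; apply/eqP => E; have := Harc q; by rewrite E Hirr.
set P := Mplus R arc; set Mm := Mminus R arc.
set Dw := degmx R e *m w k.+1; set s := Num.sqrt 2.
set a := X k.+1 - Xs.
set Z0 := Z k; set Z1 := Z k.+1; set b0 := beta k; set b1 := beta k.+1.
set bs := betastar.
set c := Mm^T *m a.
have hc : Mm^T *m X k.+1 = c by rewrite /c /a mulmxBr MmT_const // subr0.
have hb : b1 - b0 = (rho / 2) *: c.
  by apply/eqP; rewrite -subr_eq0 -hc; apply/eqP; exact: HII.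
have hz : Z1 - Zs = 2^-1 *: (P^T *m a).
  rewrite /Z1 /Zs; move/eqP: (HIII k); rewrite subr_eq0 => /eqP <-.
  by rewrite /a mulmxBr scalerBr.
have hPa : P^T *m a = 2 *: (Z1 - Zs).
  by rewrite hz scalerA mulfV ?scale1r // pnatr_eq0.
have hSX : stack_grad g (X k.+1) =
   rho *: (P *m (Z0 - Z1)) - Mm *m b1 - s *: Dw.
  by rewrite -HI addrAC !addrK.
have hSXs : stack_grad g Xs = - (Mm *m bs).
  by apply/eqP; rewrite -addr_eq0; apply/eqP.
set T1 := ip (Z1 - Zs) (Z0 - Z1).
set T2 := ip c (b1 - bs).
set J := ip a Dw.
have key : ip a (stack_grad g (X k.+1) - stack_grad g Xs)
    = 2 * rho * T1 - T2 - s * J.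
  have eP : forall V, ip a (P *m V) = ip (P^T *m a) V.
    by move=> V; rewrite ipC ip_mul ipC.
  have eM : forall V, ip a (Mm *m V) = ip c V.
    by move=> V; rewrite ipC ip_mul ipC.
  rewrite hSX hSXs opprK ipDr !ipBr !ipZr eP !eM hPa ipZl /T1 /T2 /J ipBr.
  rewrite !ipBr; ring.
have hr0 : rho != 0 by rewrite gt_eqF.
have eu : b1 - bs = (rho/2) *: c + (b0 - bs) by rewrite -hb addrA subrK.
have Eb1 : sqn (b1 - bs) = (rho/2)^+2 * sqn c + rho * ip c (b0 - bs) + sqn (b0 - bs).
  rewrite eu; set v := b0 - bs; clearbody v.
  by rewrite /sqn ipDl !ipDr !ipZl !ipZr (ipC v c); field.
have Eb01 : sqn (b0 - b1) = (rho/2)^+2 * sqn c.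
  by rewrite -opprB sqnN hb /sqn ipZl ipZr; ring.
have ET2 : T2 = rho/2 * sqn c + ip c (b0 - bs) by rewrite /T2 eu [LHS]ipDr ipZr.
have EZ : sqn (Z0 - Zs) = sqn (Z1 - Zs) + 2 * T1 + sqn (Z0 - Z1).
  by rewrite /T1 -sqnD [(Z1 - Zs) + _]addrC addrA subrK.
have H1 : mf * sqn a <=
   Gsqn rho (Z0 - Zs) (b0 - bs) - Gsqn rho (Z1 - Zs) (b1 - bs)
   - Gsqn rho (Z0 - Z1) (b0 - b1) - ip a (s *: Dw).
  apply: le_trans (strong_stack _ _ Hs Hmf) _.
  rewrite key /Gsqn EZ Eb1 Eb01 ET2 ipZr -/J.
  rewrite le_eqVlt; apply/orP; left; apply/eqP; field.
  by [].
split; first exact: H1.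
have Gge : forall U V : 'M[R]_(nA, d), 0 <= Gsqn rho U V.
  move=> U V; have hr := ltW Hrho.
  by rewrite /Gsqn addr_ge0 // mulr_ge0 ?invr_ge0 ?sqn_ge0.
have G1 := Gge (Z1 - Zs) (b1 - bs); have G2 := Gge (Z0 - Z1) (b0 - b1).
rewrite ipZr -/J in H1.
have hs : 0 < s by rewrite /s sqrtr_gt0 ltr0n.
have s2 : s * s = 2 by rewrite /s -expr2 sqr_sqrtr // ler0n.
have hs0 : s != 0 by rewrite gt_eqF.
have hm0 : mf != 0 by rewrite gt_eqF.
have e1 : 2 * (s * mf)^-1 = s * mf^-1.
  by rewrite -{1}s2; field; rewrite hm0 hs0.
have e2 : (s * mf)^-1 * (s * mf)^-1 = (2 * mf^+2)^-1 by rewrite -s2; field; rewrite hm0 hs0.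
have Lq : sqn (a + (s * mf)^-1 *: Dw) =
    mf^-1 * (mf * sqn a + s * J) + (2 * mf^+2)^-1 * sqn Dw.
  rewrite sqnD ipZr -/J /sqn ipZl ipZr -e2 -/(sqn a) -/(sqn Dw).
  by rewrite mulrA e1; field; rewrite ?hm0 ?hs0.
rewrite Lq lerD2r; apply: ler_wpM2l; first by rewrite invr_ge0 ltW.
lra.
Qed.
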